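(* Let $n,m,b,k\in\mathbb{N}$ with $b\geq\max\{2m,4\}$ and $k\ge 1$, and let $w>1$ be a number representable with $n$ bits of which the first $m$ are its integer part. Then the values $\hat{z}_1,\dots,\hat{z}_k$ returned by Algorithm PowerOf2Roots$(w,k,n,m,b)$ (described in the context) satisfy $$\left|\hat{z}_i-w^{1/2^i}\right|\leq 2\left(\frac{3}{4}\right)^{b-2m}\left(2+b+\log_2 b\right),\qquad i=1,2,\dots,k.$$
   Context: Fixed precision representation: a number $w\ge 0$ ''given by $n$ bits of which the first $m$ correspond to its integer part'' means $w=\sum_{j=m-n}^{m-1} w^{(j)}2^j$ with $w^{(j)}\in\{0,1\}$. For $x\geq 0$, ''truncating $x$ to $b$ bits after the binary point'' means replacing $x$ by $\lfloor 2^b x\rfloor/2^b$. All arithmetic inside a step is performed exactly; only the stated truncations introduce error. Algorithm SQRT$(w,n,m,b)$ (input $w\geq 1$): if $w=1$, return $1$. Otherwise: let $p\in\mathbb{N}$ with $2^p>w\geq 2^{p-1}$ and set $\hat{x}_0=2^{-p}$; let $s=\lceil\log_2 b\rceil$; for $i=1,\dots,s$ compute exactly $x_i=-w\hat{x}_{i-1}^2+2\hat{x}_{i-1}$ and let $\hat{x}_i$ be $x_i$ truncated to $b$ bits after the binary point. Then let $q\in\mathbb{N}$ with $2^{1-q}>\hat{x}_s\geq 2^{-q}$ and set $\hat{y}_0=2^{\lfloor (q-1)/2\rfloor}$; for $j=1,\dots,s$ compute exactly $y_j=\frac12(3\hat{y}_{j-1}-\hat{x}_s\hat{y}_{j-1}^3)$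 and let $\hat{y}_j$ be $y_j$ truncated to $b$ bits after the binary point. Return $\hat{y}_s$. Algorithm PowerOf2Roots$(w,k,n,m,b)$: set $\hat{z}_1=$ SQRT$(w,n,m,b)$ (a number with $m$ integer bits and $b$ fractional bits); for $i=2,\dots,k$ set $\hat{z}_i=$ SQRT$(\hat{z}_{i-1},m+b,m,b)$. Return $\hat{z}_1,\dots,\hat{z}_k$. *)

(* Defs.v *)
From Stdlib Require Import Reals Lra Lia ZArith List ClassicalEpsilon.
Open Scope R_scope.

(* w is given by n bits, the first m of which form its integer part:
   w = sum_{j=m-n}^{m-1} c_j 2^j with c_j in {0,1}. *)
Definition representable (n m : nat) (w : R) : Prop :=
  exists c : nat -> bool,
    w = fold_right Rplus 0
          (map (fun i => if c i then powerRZ 2 (Z.of_nat m - Z.of_nat n + Z.of_nat i)%Z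
                         else 0) (seq 0 n)).

Definition trunc (b : nat) (x : R) : R := IZR (Int_part (2 ^ b * x)) / 2 ^ b.

Definition exp_p (w : R) : nat :=
  epsilon (inhabits 0%nat) (fun p : nat => w < 2 ^ p /\ 2 ^ (p - 1) <= w).

Definition exp_q (x : R) : nat :=
  epsilon (inhabits 0%nat)
    (fun q : nat => x < powerRZ 2 (1 - Z.of_nat q)%Z /\ powerRZ 2 (- Z.of_nat q)%Z <= x).

Definition nsteps (b : nat) : nat := Nat.log2_up b.

Fixpoint sqrt_xhat (w : R) (b : nat) (i : nat) : R :=
  match i with
  | O => / 2 ^ exp_p w
  | S i' => let xh := sqrt_xhat w b i' in trunc b (- w * xh ^ 2 + 2 * xh)
  end.

Fixpoint sqrt_yhat (xs : R) (b : nat) (j : nat) : R :=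
  match j with
  | O => powerRZ 2 (Z.div (Z.of_nat (exp_q xs) - 1) 2)
  | S j' => let yh := sqrt_yhat xs b j' in trunc b (/ 2 * (3 * yh - xs * yh ^ 3))
  end.

(* Algorithm SQRT(w,n,m,b); n and m only describe the input format. *)
Definition SQRT (w : R) (n m b : nat) : R :=
  if Req_EM_T w 1 then 1
  else sqrt_yhat (sqrt_xhat w b (nsteps b)) b (nsteps b).

(* Algorithm PowerOf2Roots(w,k,n,m,b): zhat i for i = 1..k
   (zhat 0 := w is only a convenience value, not returned). *)
Fixpoint zhat (w : R) (n m b : nat) (i : nat) : R :=
  match i with
  | O => w
  | S O => SQRT w n m b
  | S i' => SQRT (zhat w n m b i') (m + b) m b
  end.

(* Main.v *)
Require Import Defs.
From Stdlib Require Import Reals Lra Lia Psatz ZArith ClassicalEpsilon List.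
Open Scope R_scope.

Lemma pow2_pos (k : nat) : 0 < 2 ^ k.
Proof. apply pow_lt; lra. Qed.

Lemma trunc_le b x : trunc b x <= x.
Proof.
  unfold trunc. pose proof (pow2_pos b). destruct (base_Int_part (2^b*x)) as [H1 H2].
  apply Rmult_le_reg_r with (2^b); auto. field_simplify; lra.
Qed.

Lemma trunc_gt b x : x - / 2 ^ b < trunc b x.
Proof.
  unfold trunc. pose proof (pow2_pos b). destruct (base_Int_part (2^b*x)) as [H1 H2].
  apply Rmult_lt_reg_r with (2^b); auto. field_simplify; try lra.
Qed.

Lemma trunc_ge1 b x : 1 <= x -> 1 <= trunc b x.
Proof.
  intro Hx. unfold trunc. pose proof (pow2_pos b). destruct (base_Int_part (2^b*x)) as [H1 H2].
  assert (E : 2 ^ b = IZR (2 ^ Z.of_nat b)) by (rewrite <- pow_IZR; reflexivity).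
  assert (H3 : IZR (Int_part (2^b*x)) > IZR (2 ^ Z.of_nat b) - 1).
  { rewrite <- E. nra. }
  rewrite <- minus_IZR in H3. apply lt_IZR in H3.
  assert (H4 : (2 ^ Z.of_nat b <= Int_part (2^b*x))%Z) by lia.
  apply IZR_le in H4. rewrite <- E in H4.
  apply Rmult_le_reg_r with (2^b); auto. field_simplify; lra.
Qed.

Lemma INR_lt_pow2 (N : nat) : INR N < 2 ^ N.
Proof.
  induction N. simpl; lra. rewrite S_INR. simpl. pose proof (pow2_pos N).
  assert (1 <= 2^N) by (apply pow_R1_Rle; lra). lra.
Qed.

Lemma pow2_unbounded (r : R) : exists N, r < 2 ^ N.
Proof.
  destruct (archimed r) as [H1 H2].
  destruct (Z_le_gt_dec (up r) 0) as [Hz|Hz].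
  - exists 0%nat. apply IZR_le in Hz. simpl. lra.
  - exists (Z.to_nat (up r)). pose proof (INR_lt_pow2 (Z.to_nat (up r))).
    rewrite INR_IZR_INZ, Z2Nat.id in H by lia. lra.
Qed.

Lemma exp_p_spec (w : R) : 1 <= w -> w < 2 ^ exp_p w /\ 2 ^ (exp_p w - 1) <= w.
Proof.
  intro Hw. unfold exp_p. apply epsilon_spec.
  destruct (pow2_unbounded w) as [N HN].
  induction N.
  - simpl in HN; lra.
  - destruct (Rlt_le_dec w (2^N)) as [h|h]; auto.
    exists (S N). split; auto. replace (S N - 1)%nat with N by lia. exact h.
Qed.

Lemma powerRZ_negnat (q : nat) : powerRZ 2 (- Z.of_nat q) = / 2 ^ q.
Proof. rewrite powerRZ_neg', <- pow_powerRZ. reflexivity. Qed.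

Lemma powerRZ_1minus (q : nat) : powerRZ 2 (1 - Z.of_nat q) = 2 * / 2 ^ q.
Proof.
  replace (1 - Z.of_nat q)%Z with (1 + - Z.of_nat q)%Z by lia.
  rewrite powerRZ_add by lra. rewrite powerRZ_negnat. simpl. ring.
Qed.

Lemma exp_q_spec (x : R) : 0 < x -> x < 2 ->
  x < 2 * / 2 ^ exp_q x /\ / 2 ^ exp_q x <= x.
Proof.
  intros H0 H2. rewrite <- powerRZ_1minus, <- powerRZ_negnat.
  unfold exp_q. apply epsilon_spec.
  destruct (pow2_unbounded (/ x)) as [N HN].
  assert (HN' : / 2 ^ N <= x).
  { rewrite <- (Rinv_inv x) at 1. apply Rinv_le_contravar.
    apply Rinv_0_lt_compat; lra. lra. }
  clear HN. induction N.
  - exists 0%nat. rewrite powerRZ_1minus, powerRZ_negnat. simpl in *. lra.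
  - destruct (Rle_lt_dec (/ 2 ^ N) x) as [h|h]; auto.
    exists (S N). rewrite powerRZ_1minus, powerRZ_negnat. simpl.
    rewrite Rinv_mult. replace (2 * (/2 * / 2^N)) with (/2^N) by (field; apply pow_nonzero; lra).
    split; [lra|]. simpl in HN'. rewrite Rinv_mult in HN'. exact HN'.
Qed.

Definition ee (v : R) (b i : nat) := 1 - v * sqrt_xhat v b i.

Lemma ee_step v b i : 0 < v ->
  ee v b i ^ 2 <= ee v b (S i) < ee v b i ^ 2 + v / 2 ^ b.
Proof.
  intro Hv. unfold ee. change (sqrt_xhat v b (S i)) with (trunc b (- v * sqrt_xhat v b i ^ 2 + 2 * sqrt_xhat v b i)).
  set (x := sqrt_xhat v b i).
  pose proof (trunc_le b (- v * x ^ 2 + 2 * x)).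
  pose proof (trunc_gt b (- v * x ^ 2 + 2 * x)).
  set (t := trunc b (- v * x ^ 2 + 2 * x)) in *.
  pose proof (pow2_pos b).
  replace (v / 2^b) with (v * / 2^b) by (unfold Rdiv; ring).
  assert (0 <= v * (- v * x ^ 2 + 2 * x - t)) by (apply Rmult_le_pos; lra).
  assert (0 < v * (t - (- v * x ^ 2 + 2 * x - / 2 ^ b))) by (apply Rmult_lt_0_compat; lra).
  split.
  - assert (E : (1 - v * x) ^ 2 = 1 - v * (- v * x ^ 2 + 2 * x)) by ring. rewrite E. lra.
  - assert (E : (1 - v * x) ^ 2 = 1 - v * (- v * x ^ 2 + 2 * x)) by ring. rewrite E. lra.
Qed.

Lemma ee_0 v b : 1 < v -> 0 < ee v b 0 <= 1/2.
Proof.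
  intro Hv. destruct (exp_p_spec v) as [H1 H2]; [lra|].
  unfold ee. simpl. set (p := exp_p v) in *.
  destruct p as [|p'].
  - simpl in H1. lra.
  - replace (S p' - 1)%nat with p' in H2 by lia. simpl in *.
    pose proof (pow2_pos p').
    assert (v * / (2 * 2^p') < 1).
    { apply Rmult_lt_reg_r with (2 * 2^p'). lra. field_simplify; lra. }
    assert (1/2 <= v * / (2 * 2^p')).
    { apply Rmult_le_reg_r with (2 * 2^p'). lra. field_simplify; lra. }
    lra.
Qed.

Lemma ee_bounds v b : 1 < v -> v / 2 ^ b <= 1/4 -> forall i, 0 <= ee v b i <= 1/2.
Proof.
  intros Hv Ht. induction i.
  - pose proof (ee_0 v b Hv); lra.
  - pose proof (ee_step v b i ltac:(lra)). nra.
Qed.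

Lemma rec_bound (a : nat -> R) (al eps tau : R) :
  0 < eps -> 0 <= tau -> 0 <= al ->
  (forall j, 0 <= a j) -> (forall j, a (S j) <= a j ^ 2 + tau) -> a 0%nat <= al ->
  (1 + / eps) * 4 * tau <= 1 ->
  forall j, a j <= ((1 + eps) * al) ^ (2 ^ j)%nat + 2 * tau.
Proof.
  intros He Ht Hal Ha Hrec H0 Hc.
  assert (Hmain : forall j, a j <= ((1 + eps) * al) ^ (2 ^ j)%nat / (1 + eps) + 2 * tau).
  { induction j.
    - simpl. replace ((1 + eps) * al * 1 / (1 + eps)) with al by (field; lra). lra.
    - set (Q := ((1 + eps) * al) ^ (2 ^ j)%nat) in *.
      assert (HQ : ((1 + eps) * al) ^ (2 ^ S j)%nat = Q ^ 2).
      { unfold Q. rewrite <- pow_mult. f_equal. simpl. lia. }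
      rewrite HQ.
      assert (HQ0 : 0 <= Q) by (apply pow_le; nra).
      set (P := Q / (1 + eps)) in *.
      assert (HP : Q ^ 2 / (1 + eps) = (1 + eps) * P ^ 2) by (unfold P; field; lra).
      rewrite HP.
      assert (HP0 : 0 <= P) by (unfold P; apply Rmult_le_pos; [lra| left; apply Rinv_0_lt_compat; lra]).
      pose proof (Hrec j). pose proof (Ha j).
      set (ie := / eps) in *.
      assert (Hie : eps * ie = 1) by (unfold ie; field; lra).
      assert (Hie0 : 0 < ie) by (unfold ie; apply Rinv_0_lt_compat; lra).
      assert (Hsq : (P + 2 * tau) ^ 2 <= (1 + eps) * P ^ 2 + (1 + ie) * 4 * tau ^ 2).
      { assert (0 <= ie * (eps * P - 2 * tau) ^ 2) by (apply Rmult_le_pos; [lra | apply pow2_ge_0]).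
        assert (Eq : (1 + eps) * P ^ 2 + (1 + ie) * 4 * tau ^ 2 - (P + 2 * tau) ^ 2
                     = ie * (eps * P - 2 * tau) ^ 2) by (unfold ie; field; lra).
        lra. }
      assert (a j ^ 2 <= (P + 2 * tau) ^ 2) by (apply pow_incr; lra).
      nra. }
  intro j. pose proof (Hmain j).
  assert (0 <= ((1 + eps) * al) ^ (2 ^ j)%nat) by (apply pow_le; nra).
  assert (((1 + eps) * al) ^ (2 ^ j)%nat / (1 + eps) <= ((1 + eps) * al) ^ (2 ^ j)%nat).
  { unfold Rdiv. rewrite <- (Rmult_1_r (((1 + eps) * al) ^ (2 ^ j)%nat)) at 2.
    apply Rmult_le_compat_l; auto. rewrite <- Rinv_1. apply Rinv_le_contravar; lra. }
  lra.
Qed.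

Lemma y0_spec (x : R) b : 0 < x < 1 ->
  1 <= sqrt_yhat x b 0 /\ 1/4 <= x * sqrt_yhat x b 0 ^ 2 < 1.
Proof.
  intros Hx. destruct (exp_q_spec x) as [H1 H2]; try lra.
  simpl. set (q := exp_q x) in *.
  destruct q as [|q'].
  - simpl in H2. lra.
  - replace (Z.of_nat (S q') - 1)%Z with (Z.of_nat q') by lia.
    change 2%Z with (Z.of_nat 2). rewrite <- Nat2Z.inj_div, <- pow_powerRZ. change (IZR (Z.of_nat 2)) with 2.
    set (j := (q' / 2)%nat).
    assert (Hq : (q' = 2 * j + q' mod 2)%nat) by (apply Nat.div_mod; lia).
    assert (Hc : (q' mod 2 < 2)%nat) by (apply Nat.mod_upper_bound; lia).
    set (c := (q' mod 2)%nat) in *.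
    assert (E : 2 ^ S q' = (2 ^ j) ^ 2 * 2 ^ S c).
    { rewrite Hq. rewrite <- pow_mult. rewrite <- pow_add. f_equal. lia. }
    rewrite E in H1, H2.
    assert (HA : 1 <= 2 ^ j) by (apply pow_R1_Rle; lra).
    set (A := 2 ^ j) in *.
    split; [exact HA|].
    assert (HA2 : 0 < A ^ 2) by nra.
    destruct c as [|[|c']]; [| |lia]; simpl in H1, H2;
      rewrite Rinv_mult in H1, H2;
      apply (Rmult_lt_compat_r (A^2)) in H1; auto;
      apply (Rmult_le_compat_r (A^2)) in H2; try lra;
      field_simplify in H1; field_simplify in H2; try lra.

Qed.

Lemma mul_le1 a c : 0 <= a <= 1 -> 0 <= c <= 1 -> a * c <= 1.
Proof. intros. nra. Qed.

Lemma y_step (x r y : R) b : 0 < x < 1 -> r * r = x -> 0 < r -> 1 <= y -> r * y <= 1 ->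
  let y' := trunc b (/ 2 * (3 * y - x * y ^ 3)) in
  1 <= y' /\ (1 - r * y) ^ 2 * (3 - (1 - r * y)) / 2 <= 1 - r * y' /\
  1 - r * y' < (1 - r * y) ^ 2 * (3 - (1 - r * y)) / 2 + r / 2 ^ b.
Proof.
  intros Hx Hr Hr0 Hy Hu y'.
  set (F := / 2 * (3 * y - x * y ^ 3)).
  assert (Hr1 : r <= 1) by nra.
  assert (HF1 : 1 <= F).
  { unfold F. assert (Hu0 : 0 <= r * y) by nra. set (u := r * y) in *.
    assert (x * y * y <= 1) by (replace (x*y*y) with (u*u) by (unfold u; rewrite <- Hr; ring); apply mul_le1; lra).
    assert (x * y <= 1) by (replace (x*y) with (r*u) by (unfold u; rewrite <- Hr; ring); apply mul_le1; lra).
    assert (Eq : 3 * y - x * y ^ 3 - 2 = (y - 1) * (3 - x * (y * y + y + 1)) + (1 - x)) by ring.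
    assert (0 <= (y - 1) * (3 - x * (y * y + y + 1))) by (apply Rmult_le_pos; nra).
    lra. }
  assert (HrF : 1 - r * F = (1 - r * y) ^ 2 * (3 - (1 - r * y)) / 2).
  { unfold F. replace x with (r * r) by exact Hr. field. }
  unfold y'. fold F. pose proof (trunc_le b F). pose proof (trunc_gt b F).
  clear y'. set (y' := trunc b F) in *.
  split; [apply trunc_ge1; exact HF1|].
  assert (r * y' <= r * F) by (apply Rmult_le_compat_l; lra).
  assert (r * (F - / 2 ^ b) < r * y') by (apply Rmult_lt_compat_l; lra).
  assert (E2 : r / 2 ^ b = r * / 2 ^ b) by (unfold Rdiv; ring). rewrite E2.
  split; nra.
Qed.

Lemma y_inv (x : R) b : 0 < x < 1 -> / 2 ^ b <= 1/16 ->
  forall j, 1 <= sqrt_yhat x b j /\ 0 <= 1 - sqrt x * sqrt_yhat x b j <= 1/2 /\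
    1 - sqrt x * sqrt_yhat x b (S j) <= 3/2 * (1 - sqrt x * sqrt_yhat x b j) ^ 2 + / 2 ^ b.
Proof.
  intros Hx Hb.
  assert (Hr : sqrt x * sqrt x = x) by (apply sqrt_sqrt; lra).
  assert (Hr0 : 0 < sqrt x) by (apply sqrt_lt_R0; lra).
  assert (Hr1 : sqrt x <= 1) by nra.
  set (r := sqrt x) in *.
  assert (Hstep : forall j, 1 <= sqrt_yhat x b j -> 0 <= 1 - r * sqrt_yhat x b j <= 1/2 ->
     1 <= sqrt_yhat x b (S j) /\ 0 <= 1 - r * sqrt_yhat x b (S j) <= 1/2 /\
     1 - r * sqrt_yhat x b (S j) <= 3/2 * (1 - r * sqrt_yhat x b j) ^ 2 + / 2 ^ b).
  { intros j H1 H2.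
    change (sqrt_yhat x b (S j)) with (trunc b (/2*(3*sqrt_yhat x b j - x*sqrt_yhat x b j ^ 3))).
    destruct (y_step x r (sqrt_yhat x b j) b Hx Hr Hr0 H1 ltac:(lra)) as [A [B C]].
    set (g := 1 - r * sqrt_yhat x b j) in *.
    assert (E : r / 2 ^ b <= / 2 ^ b).
    { unfold Rdiv. rewrite <- (Rmult_1_l (/ 2^b)) at 2. apply Rmult_le_compat_r; [|lra].
      left; apply Rinv_0_lt_compat, pow2_pos. }
    assert (0 <= g ^ 2 * (3 - g) / 2) by (apply Rmult_le_pos; [apply Rmult_le_pos; nra| lra]).
    assert (g ^ 2 * (3 - g) / 2 <= 3/2 * g ^ 2) by nra.
    assert (g ^ 2 <= 1/4) by nra.
    split; [exact A|]. split; [split; lra|]. lra. }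
  assert (Hinv : forall j, 1 <= sqrt_yhat x b j /\ 0 <= 1 - r * sqrt_yhat x b j <= 1/2).
  { induction j.
    - destruct (y0_spec x b Hx) as [H1 H2].
      assert (0 < r * sqrt_yhat x b 0) by nra.
      assert ((r * sqrt_yhat x b 0) ^ 2 = x * sqrt_yhat x b 0 ^ 2) by (rewrite <- Hr; ring).
      set (u := r * sqrt_yhat x b 0) in *.
      assert (u * u < 1) by nra. assert (1/4 <= u * u) by nra.
      split; [exact H1|]. split.
      + destruct (Rle_lt_dec u 1); [lra|]. nra.
      + destruct (Rle_lt_dec (1/2) u); [lra|]. nra.
    - destruct IHj as [H1 H2]. destruct (Hstep j H1 H2) as [A [B C]]. auto. }
  intro j. destruct (Hinv j) as [H1 H2]. destruct (Hstep j H1 H2) as [A [B C]]. auto.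
Qed.

Lemma sq_le (a c : R) : 0 <= a -> 0 <= c -> a * a <= c * c -> a <= c.
Proof. intros. destruct (Rle_lt_dec a c); auto. nra. Qed.

Lemma numeric (v e g : R) (m b : nat) :
  (1 <= m)%nat -> (2 * m <= b)%nat -> (4 <= b)%nat -> 1 <= v < 2 ^ m ->
  0 <= e <= 1/2 -> 0 <= g <= 1/2 ->
  ((1 + 2 * INR b) * 4 * (2 ^ m / 2 ^ b) <= 1 ->
     e <= 5 * 2 ^ m / 2 ^ b /\ g <= 4 * (3/4) ^ b) ->
  sqrt v * e <= (3/4) ^ (b - 2 * m) * (2 + INR b) /\
  sqrt v * g <= (3/4) ^ (b - 2 * m) * (2 + INR b).
Proof.
  intros Hm Hb Hb4 Hv He Hg Hbig.
  set (d := (b - 2 * m)%nat).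
  assert (Hbd : b = (m + m + d)%nat) by (unfold d; lia).
  set (A := 2 ^ m). set (D := 2 ^ d). set (P := (3/4) ^ d). set (Q := (3/4) ^ m).
  assert (H2b : 2 ^ b = A * A * D) by (rewrite Hbd, !pow_add; reflexivity).
  assert (H34b : (3/4) ^ b = Q * Q * P) by (rewrite Hbd, !pow_add; reflexivity).
  assert (HDP : 1 <= D * P).
  { unfold D, P. rewrite <- Rpow_mult_distr. apply pow_R1_Rle. lra. }
  assert (HDPP : 1 <= D * P * P).
  { unfold D, P. rewrite Rmult_assoc, <- Rpow_mult_distr, <- Rpow_mult_distr. apply pow_R1_Rle. lra. }
  assert (HAQ : A * (Q * Q * Q * Q) <= 1).
  { unfold A, Q. rewrite <- !Rpow_mult_distr. rewrite <- (pow1 m). apply pow_incr. lra. }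
  assert (HvA : v < A) by (unfold A; apply Hv).
  assert (HA : 1 <= A) by (apply pow_R1_Rle; lra).
  assert (HA2 : 2 <= A) by (unfold A; destruct m; [lia|]; simpl; pose proof (pow_R1_Rle 2 m); lra).
  assert (HP : 0 < P) by (apply pow_lt; lra).
  assert (HQ : 0 < Q) by (apply pow_lt; lra).
  assert (HD : 0 < D) by (apply pow_lt; lra).
  assert (HB : 4 <= INR b) by (apply le_INR in Hb4; simpl in Hb4; lra).
  assert (HS : sqrt v * sqrt v = v) by (apply sqrt_sqrt; lra).
  assert (HS0 : 0 <= sqrt v) by apply sqrt_pos.
  set (S := sqrt v) in *. set (B := INR b) in *.
  set (E := P * (2 + B)).
  change ((3/4) ^ (b - 2 * m)) with P. fold E.
  assert (HE : 0 <= E) by (unfold E; nra).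
  destruct (Rle_lt_dec ((1 + 2 * B) * 4 * (2 ^ m / 2 ^ b)) 1) as [Ce|Ce].
  - destruct (Hbig Ce) as [He' Hg']. clear Hbig. fold A in He'. rewrite H2b in He'. rewrite H34b in Hg'.
    split.
    + apply sq_le; [nra|exact HE|].
      assert (Hee : e <= 5 / (A * D)) by (replace (5 / (A * D)) with (5 * A / (A * A * D)) by (field; lra); lra).
      assert (S * e * (S * e) <= A * (5 / (A * D)) * (5 / (A * D))).
      { replace (S * e * (S * e)) with (v * e * e) by (rewrite <- HS; ring).
        assert (v * e <= A * (5 / (A * D))) by (apply Rmult_le_compat; [lra|lra|lra|exact Hee]).
        apply Rmult_le_compat; try lra. apply Rmult_le_pos; lra. }
      assert (A * (5 / (A * D)) * (5 / (A * D)) <= E * E).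
      { replace (A * (5 / (A * D)) * (5 / (A * D))) with (25 / (A * D * D)) by (field; lra).
        apply Rmult_le_reg_r with (A * D * D). nra.
        replace (25 / (A * D * D) * (A * D * D)) with 25 by (field; lra).
        unfold E. 
        assert (1 <= (D * P) * (D * P)) by nra.
        assert (36 <= (2 + B) * (2 + B)) by nra.
        assert (36 <= (D * P) * (D * P) * ((2 + B) * (2 + B))) by nra.
        nra. }
      lra.
    + apply sq_le; [nra|exact HE|].
      assert (S * g * (S * g) <= A * (4 * (Q * Q * P)) * (4 * (Q * Q * P))).
      { replace (S * g * (S * g)) with (v * g * g) by (rewrite <- HS; ring).
        assert (v * g <= A * (4 * (Q * Q * P))) by (apply Rmult_le_compat; lra).
        apply Rmult_le_compat; try lra. apply Rmult_le_pos; lra. }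
      assert (A * (4 * (Q * Q * P)) * (4 * (Q * Q * P)) <= E * E).
      { replace (A * (4 * (Q * Q * P)) * (4 * (Q * Q * P))) with (16 * (A * (Q * Q * Q * Q)) * (P * P)) by ring.
        unfold E. assert (16 <= (2 + B) * (2 + B)) by nra.
        assert (0 < P * P) by nra.
        assert (16 * (A * (Q * Q * Q * Q)) <= (2 + B) * (2 + B)) by nra.
        nra. }
      lra.
  - clear Hbig. fold A in Ce. rewrite H2b in Ce.
    replace ((1 + 2 * B) * 4 * (A / (A * A * D))) with ((1 + 2 * B) * 4 / (A * D)) in Ce by (field; lra).
    assert (HAD : A * D < (1 + 2 * B) * 4).
    { apply Rmult_lt_reg_r with (/ (A * D)). apply Rinv_0_lt_compat; nra.
      rewrite Rinv_r by nra. exact Ce. }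
    assert (HAE : A / 4 <= E * E).
    { unfold E. assert (A <= A * (D * P * P)) by nra.
      assert (A * (D * P * P) <= (1 + 2 * B) * 4 * (P * P)).
      { replace (A * (D * P * P)) with ((A * D) * (P * P)) by ring. apply Rmult_le_compat_r; nra. }
      nra. }
    assert (HSS : S * (1/2) * (S * (1/2)) <= A / 4) by nra.
    assert (Se : S * e * (S * e) <= S * (1/2) * (S * (1/2))).
    { assert (S * e <= S * (1/2)) by (apply Rmult_le_compat_l; lra).
      apply Rmult_le_compat; try lra; apply Rmult_le_pos; lra. }
    assert (Sg : S * g * (S * g) <= S * (1/2) * (S * (1/2))).
    { assert (S * g <= S * (1/2)) by (apply Rmult_le_compat_l; lra).
      apply Rmult_le_compat; try lra; apply Rmult_le_pos; lra. }
    split; (apply sq_le; [apply Rmult_le_pos; lra|exact HE|lra]).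
Qed.

Lemma exp_pow a n : exp a ^ n = exp (INR n * a).
Proof.
  induction n. simpl. rewrite Rmult_0_l, exp_0. reflexivity.
  rewrite S_INR. simpl. rewrite IHn. rewrite <- exp_plus. f_equal. ring.
Qed.

Lemma one_plus_inv_pow (Nn : nat) : (1 <= Nn)%nat -> (1 + / INR Nn) ^ Nn <= 3.
Proof.
  intro H. apply le_INR in H. simpl in H.
  assert (HN : 0 < INR Nn) by lra.
  apply Rle_trans with (exp (/ INR Nn) ^ Nn).
  - apply pow_incr. split. left. assert (0 < / INR Nn) by (apply Rinv_0_lt_compat; lra). lra.
    apply exp_ineq1_le.
  - rewrite exp_pow. rewrite Rinv_r by lra. apply exp_le_3.
Qed.

Lemma pow_le_small (al : R) (n1 n2 : nat) : 0 <= al <= 1 -> (n1 <= n2)%nat -> al ^ n2 <= al ^ n1.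
Proof.
  intros H Hn. replace n2 with (n1 + (n2 - n1))%nat by lia. rewrite pow_add.
  rewrite <- (Rmult_1_r (al ^ n1)) at 2. apply Rmult_le_compat_l. apply pow_le; lra.
  rewrite <- (pow1 (n2 - n1)). apply pow_incr. lra.
Qed.

Lemma nsteps_spec b : (2 <= b)%nat -> (b <= 2 ^ nsteps b <= 2 * b)%nat.
Proof.
  intro Hb. unfold nsteps. destruct (Nat.log2_up_spec b) as [H1 H2]; [lia|].
  split; auto. destruct (Nat.log2_up b) as [|s] eqn:E.
  - simpl in H2. lia.
  - simpl in H1. rewrite Nat.pow_succ_r'. lia.
Qed.

Lemma big_bound (a : nat -> R) (al tau : R) (b : nat) :
  (2 <= b)%nat -> 0 <= tau -> 0 <= al <= 1 ->
  (forall j, 0 <= a j) -> (forall j, a (S j) <= a j ^ 2 + tau) -> a 0%nat <= al ->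
  (1 + 2 * INR b) * 4 * tau <= 1 ->
  a (nsteps b) <= 3 * al ^ b + 2 * tau.
Proof.
  intros Hb Ht Hal Ha Hrec H0 Hc.
  destruct (nsteps_spec b Hb) as [N1 N2].
  set (Nn := (2 ^ nsteps b)%nat) in *.
  assert (HN1 : INR b <= INR Nn) by (apply le_INR; lia).
  assert (HN2 : INR Nn <= 2 * INR b) by (replace (2 * INR b) with (INR (2 * b)) by (rewrite mult_INR; reflexivity); apply le_INR; lia).
  assert (Hb2 : 2 <= INR b) by (apply le_INR in Hb; simpl in Hb; lra).
  assert (HNpos : 0 < INR Nn) by lra.
  pose proof (rec_bound a al (/ INR Nn) tau ltac:(apply Rinv_0_lt_compat; lra) Ht ltac:(lra) Ha Hrec H0) as R.
  rewrite Rinv_inv in R.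
  assert (Hc' : (1 + INR Nn) * 4 * tau <= 1) by nra.
  specialize (R Hc' (nsteps b)). fold Nn in R.
  rewrite Rpow_mult_distr in R.
  assert ((1 + / INR Nn) ^ Nn <= 3) by (apply one_plus_inv_pow; lia).
  assert (al ^ Nn <= al ^ b) by (apply pow_le_small; auto).
  assert (0 <= al ^ Nn) by (apply pow_le; lra).
  assert (0 <= (1 + / INR Nn) ^ Nn) by (apply pow_le; assert (0 < / INR Nn) by (apply Rinv_0_lt_compat; lra); lra).
  nra.
Qed.

Lemma SQRT_spec v n m b : 1 <= v -> v < 2 ^ m -> (1 <= m)%nat -> (2 * m <= b)%nat -> (4 <= b)%nat ->
  1 <= SQRT v n m b /\ SQRT v n m b < 2 ^ m /\
  Rabs (SQRT v n m b - sqrt v) <= (3/4) ^ (b - 2 * m) * (2 + INR b).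
Proof.
  intros Hv1 Hvm Hm Hb Hb4.
  assert (HA2 : 2 <= 2 ^ m) by (destruct m; [lia|]; simpl; pose proof (pow_R1_Rle 2 m); lra).
  assert (HE0 : 0 <= (3/4) ^ (b - 2 * m) * (2 + INR b)).
  { apply Rmult_le_pos. apply pow_le; lra. pose proof (pos_INR b); lra. }
  unfold SQRT. destruct (Req_EM_T v 1) as [Hv|Hv].
  { subst. rewrite sqrt_1. split; [lra|]. split; [lra|]. rewrite Rminus_diag, Rabs_R0. exact HE0. }
  assert (Hv' : 1 < v) by lra.
  set (s := nsteps b).
  assert (H2b : 2 ^ b = 2 ^ m * 2 ^ 2 * 2 ^ (b - m - 2)).
  { rewrite <- !pow_add. f_equal. lia. }
  assert (H2bm : 1 <= 2 ^ (b - m - 2)) by (apply pow_R1_Rle; lra).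
  assert (Hpb : 0 < 2 ^ b) by apply pow2_pos.
  assert (Htau : 2 ^ m / 2 ^ b <= 1/4).
  { rewrite H2b. unfold Rdiv. apply Rmult_le_reg_r with (2 ^ m * 2 ^ 2 * 2 ^ (b - m - 2)).
    simpl; nra. field_simplify; simpl; nra. }
  assert (Hvt : v / 2 ^ b <= 2 ^ m / 2 ^ b).
  { unfold Rdiv. apply Rmult_le_compat_r; [left; apply Rinv_0_lt_compat; lra|lra]. }
  assert (Hib : / 2 ^ b <= 1/16).
  { replace (1/16) with (/ 2 ^ 4) by (simpl; field). apply Rinv_le_contravar. simpl; lra.
    apply Rle_pow; [lra|lia]. }
  assert (Hee := ee_bounds v b Hv' ltac:(lra)).
  set (e := ee v b s).
  assert (He : 0 <= e <= 1/2) by apply Hee.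
  set (x := sqrt_xhat v b s).
  assert (Hvx : v * x = 1 - e) by (unfold e, ee, x; ring).
  assert (Hx : 0 < x < 1).
  { split. nra. nra. }
  destruct (y_inv x b Hx Hib s) as [Hz1 [Hg _]].
  pose proof (y_inv x b Hx Hib) as Hyinv.
  set (z := sqrt_yhat x b s) in *.
  assert (Hr : sqrt x * sqrt x = x) by (apply sqrt_sqrt; lra).
  assert (Hr0 : 0 < sqrt x) by (apply sqrt_lt_R0; lra).
  set (r := sqrt x) in *.
  set (g := 1 - r * z) in *.
  assert (HS : sqrt v * sqrt v = v) by (apply sqrt_sqrt; lra).
  assert (HS0 : 0 < sqrt v) by (apply sqrt_lt_R0; lra).
  set (S := sqrt v) in *.
  destruct (numeric v e g m b Hm Hb Hb4 ltac:(lra) He Hg) as [NE NG].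
  { intro Ce. split.
    -
      assert (R := big_bound (ee v b) (1/2) (2 ^ m / 2 ^ b) b ltac:(lia)
        ltac:(unfold Rdiv; apply Rmult_le_pos; [apply pow_le; lra| left; apply Rinv_0_lt_compat; lra])
        ltac:(lra) ltac:(intro j; apply Hee)
        ltac:(intro j; pose proof (ee_step v b j ltac:(lra)); lra)
        ltac:(pose proof (ee_0 v b Hv'); lra) Ce).
      fold s e in R.
      assert (Hh : (1/2) ^ b = / 2 ^ b) by (unfold Rdiv; rewrite Rmult_1_l, pow_inv; reflexivity).
      rewrite Hh in R.
      assert (/ 2 ^ b <= 2 ^ m / 2 ^ b) by (unfold Rdiv; rewrite <- (Rmult_1_l (/ 2^b)) at 1; apply Rmult_le_compat_r; [left; apply Rinv_0_lt_compat; lra|lra]).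
      replace (5 * 2 ^ m / 2 ^ b) with (5 * (2 ^ m / 2 ^ b)) by (unfold Rdiv; ring). lra.
    -
      set (a := fun j => 3/2 * (1 - r * sqrt_yhat x b j)).
      assert (R := big_bound a (3/4) (3/2 * / 2 ^ b) b ltac:(lia)
        ltac:(assert (0 < / 2 ^ b) by (apply Rinv_0_lt_compat; lra); lra)
        ltac:(lra) ltac:(intro j; unfold a; destruct (Hyinv j) as [_ [? _]]; lra)
        ltac:(intro j; unfold a; destruct (Hyinv j) as [_ [? ?]]; nra)
        ltac:(unfold a; destruct (Hyinv 0%nat) as [_ [? _]]; lra)).
      assert (Hc : (1 + 2 * INR b) * 4 * (3/2 * / 2 ^ b) <= 1).
      { assert (3/2 * / 2 ^ b <= 2 ^ m / 2 ^ b) by (unfold Rdiv; apply Rmult_le_compat_r; [left; apply Rinv_0_lt_compat; lra|lra]).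
        pose proof (pos_INR b). nra. }
      specialize (R Hc). unfold a in R. fold s z r g in R.
      assert (Hh : (1/2) ^ b <= (3/4) ^ b) by (apply pow_incr; lra).
      assert (Hh2 : (1/2) ^ b = / 2 ^ b) by (unfold Rdiv; rewrite Rmult_1_l, pow_inv; reflexivity).
      lra. }
  fold s e x z r g S.
  set (c := r * S).
  assert (Hc2 : c * c = 1 - e) by (unfold c; rewrite <- Hvx, <- Hr, <- HS; ring).
  assert (Hc0 : 0 < c) by (unfold c; nra).
  assert (Hc1 : c <= 1) by nra.
  assert (Hce : 1 <= c * (1 + e)).
  { apply sq_le; try lra. nra.
    assert ((1 - e) * (1 + e) * (1 + e) >= 1) by nra.
    replace (c * (1 + e) * (c * (1 + e))) with ((c * c) * (1 + e) * (1 + e)) by ring. rewrite Hc2. lra. }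
  assert (Hup : z - S <= S * e).
  { apply Rmult_le_reg_l with r; auto.
    assert (r * z = 1 - g) by (unfold g; ring).
    replace (r * (z - S)) with (r * z - c) by (unfold c; ring).
    replace (r * (S * e)) with (c * e) by (unfold c; ring). nra. }
  assert (Hlo : S - z <= S * g).
  { apply Rmult_le_reg_l with r; auto.
    assert (r * z = 1 - g) by (unfold g; ring).
    replace (r * (S - z)) with (c - r * z) by (unfold c; ring).
    replace (r * (S * g)) with (c * g) by (unfold c; ring). nra. }
  assert (Hzm : z < 2 ^ m).
  { assert (Hzz : z * z * x <= 1).
    { assert (r * z <= 1) by (unfold g in Hg; lra).
      replace (z * z * x) with ((r * z) * (r * z)) by (rewrite <- Hr; ring). apply mul_le1; unfold g in Hg; lra. }
    assert (z * z <= 2 * v) by (apply Rmult_le_reg_r with x; [lra|]; replace (2 * v * x) with (2 * (v * x)) by ring; rewrite Hvx; lra).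
    destruct (Rlt_le_dec z (2 ^ m)); auto. nra. }
  split; [exact Hz1|]. split; [exact Hzm|].
  fold S in NE, NG. apply Rabs_le. split; lra.
Qed.

Lemma repr_sum (a : Z) (c : nat -> bool) n k :
  fold_right Rplus 0 (map (fun i => if c i then powerRZ 2 (a + Z.of_nat i) else 0) (seq k n))
  <= powerRZ 2 (a + Z.of_nat (k + n)) - powerRZ 2 (a + Z.of_nat k).
Proof.
  revert k. induction n; intro k.
  - simpl. rewrite Nat.add_0_r. lra.
  - simpl seq. simpl map. simpl fold_right. specialize (IHn (S k)).
    replace (k + S n)%nat with (S k + n)%nat by lia.
    assert (E : powerRZ 2 (a + Z.of_nat (S k)) = 2 * powerRZ 2 (a + Z.of_nat k)).
    { replace (a + Z.of_nat (S k))%Z with (1 + (a + Z.of_nat k))%Z by lia.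
      rewrite powerRZ_add by lra. simpl. ring. }
    rewrite E in IHn.
    assert (0 <= powerRZ 2 (a + Z.of_nat k)) by (apply powerRZ_le; lra).
    destruct (c k); lra.
Qed.

Lemma repr_lt n m w : representable n m w -> w < 2 ^ m.
Proof.
  intros [c Hc]. subst w.
  pose proof (repr_sum (Z.of_nat m - Z.of_nat n) c n 0).
  rewrite Nat.add_0_l in H.
  replace (Z.of_nat m - Z.of_nat n + Z.of_nat n)%Z with (Z.of_nat m) in H by lia.
  rewrite <- pow_powerRZ in H.
  assert (0 < powerRZ 2 (Z.of_nat m - Z.of_nat n + Z.of_nat 0)) by (apply powerRZ_lt; lra).
  lra.
Qed.

Lemma zhat_S w n m b i : zhat w n m b (S i) = SQRT (zhat w n m b i) 0 m b.
Proof. destruct i; reflexivity. Qed.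

Lemma rp_pos w y : 0 < Rpower w y.
Proof. unfold Rpower. apply exp_pos. Qed.

Lemma rp_S w i : 1 <= w -> Rpower w (/ 2 ^ S i) = sqrt (Rpower w (/ 2 ^ i)).
Proof.
  intro Hw. rewrite <- Rpower_sqrt by apply rp_pos. rewrite Rpower_mult. f_equal.
  simpl. rewrite Rinv_mult. ring.
Qed.

Lemma rp_ge1 w i : 1 <= w -> 1 <= Rpower w (/ 2 ^ i).
Proof.
  intro Hw. rewrite <- (Rpower_O w) by lra. apply Rle_Rpower; auto.
  left. apply Rinv_0_lt_compat, pow2_pos.
Qed.

Lemma sqrt_diff a c : 1 <= a -> 1 <= c -> Rabs (sqrt a - sqrt c) <= Rabs (a - c) / 2.
Proof.
  intros Ha Hc.
  assert (Sa : sqrt a * sqrt a = a) by (apply sqrt_sqrt; lra).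
  assert (Sc : sqrt c * sqrt c = c) by (apply sqrt_sqrt; lra).
  assert (Sa1 : 1 <= sqrt a) by (rewrite <- sqrt_1; apply sqrt_le_1_alt; lra).
  assert (Sc1 : 1 <= sqrt c) by (rewrite <- sqrt_1; apply sqrt_le_1_alt; lra).
  set (p := sqrt a) in *. set (q := sqrt c) in *.
  assert (E : a - c = (p - q) * (p + q)) by (rewrite <- Sa, <- Sc; ring).
  rewrite E, Rabs_mult, (Rabs_right (p + q)) by lra.
  pose proof (Rabs_pos (p - q)). nra.
Qed.

Theorem theorem2 (n m b k : nat) (w : R) :
  (Nat.max (2 * m) 4 <= b)%nat -> (1 <= k)%nat ->
  1 < w -> representable n m w ->
  forall i : nat, (1 <= i <= k)%nat ->
    Rabs (zhat w n m b i - Rpower w (/ 2 ^ i))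
      <= 2 * (3 / 4) ^ (b - 2 * m) * (2 + INR b + ln (INR b) / ln 2).
Proof.
  intros Hb Hk Hw Hr i Hi.
  pose proof (repr_lt n m w Hr) as Hwm.
  assert (Hm : (1 <= m)%nat).
  { destruct m; [simpl in Hwm; lra| lia]. }
  assert (Hb2 : (2 * m <= b)%nat) by lia.
  assert (Hb4 : (4 <= b)%nat) by lia.
  set (E := (3/4) ^ (b - 2 * m) * (2 + INR b)).
  assert (HE0 : 0 <= E).
  { apply Rmult_le_pos. apply pow_le; lra. pose proof (pos_INR b); lra. }
  assert (Inv : forall j, 1 <= zhat w n m b j < 2 ^ m /\
            Rabs (zhat w n m b j - Rpower w (/ 2 ^ j)) <= 2 * E).
  { induction j.
    - simpl. replace (/ 1) with 1 by field. rewrite Rpower_1 by lra.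
      rewrite Rminus_diag, Rabs_R0. split; lra.
    - destruct IHj as [[H1 H2] H3].
      rewrite zhat_S, rp_S by lra.
      destruct (SQRT_spec (zhat w n m b j) 0 m b H1 H2 Hm Hb2 Hb4) as [A [B C]].
      fold E in C. split; [lra|].
      pose proof (sqrt_diff (zhat w n m b j) (Rpower w (/ 2 ^ j)) H1 (rp_ge1 w j ltac:(lra))).
      set (zz := SQRT (zhat w n m b j) 0 m b) in *.
      replace (zz - sqrt (Rpower w (/ 2 ^ j))) with
        ((zz - sqrt (zhat w n m b j)) + (sqrt (zhat w n m b j) - sqrt (Rpower w (/ 2 ^ j)))) by ring.
      eapply Rle_trans; [apply Rabs_triang|]. lra. }
  destruct (Inv i) as [_ H].
  assert (0 <= ln (INR b) / ln 2).
  { pose proof ln_lt_2.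
    assert (ln 1 < ln (INR b)) by (apply ln_increasing; [lra|apply le_INR in Hb4; simpl in Hb4; lra]).
    rewrite ln_1 in H1. unfold Rdiv. apply Rmult_le_pos; [lra|left; apply Rinv_0_lt_compat; lra]. }
  assert (0 <= (3/4) ^ (b - 2 * m)) by (apply pow_le; lra).
  unfold E in H. nra.
Qed.
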